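(* Let $(G_n)_{n\ge1}$ be an expanding covering tower of finite $k$-regular graphs. Then exactly one of the following holds: (1) all but finitely many of the $G_n$ are bipartite; (2) there exists $r>0$ such that for every $n$, at least $r|V(G_n)|$ edges of $G_n$ must be erased to make it bipartite.
   Context: A covering tower is a sequence of finite connected graphs $G_n$ together with covering maps $G_{n+1}\to G_n$ for all $n\ge1$. It is expanding if the Cheeger constants $\mathrm{Ch}(G_n)=\min_{0<|A|\le|V(G_n)|/2}|L(A)|/|A|$ (with $L(A)$ the set of edges between $A$ and its complement) are bounded below by a positive constant. *)

(* Defs.v *)
From HB Require Import structures.
From mathcomp Require Import all_boot all_order all_algebra.
Set Implicit Arguments. Unset Strict Implicit. Unset Printing Implicit Defensive.
Import Order.TTheory GRing.Theory Num.Theory.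

Definition simple_graph (V : finType) (e : rel V) : Prop :=
  symmetric e /\ irreflexive e.

Definition connected_graph (V : finType) (e : rel V) : Prop :=
  (0 < #|V|)%N /\ forall x y : V, connect e x y.

Definition regular_graph (k : nat) (V : finType) (e : rel V) : Prop :=
  forall x : V, #|[set y | e x y]| = k.

Definition covering_map (V1 V2 : finType) (e1 : rel V1) (e2 : rel V2)
    (f : V1 -> V2) : Prop :=
  [/\ forall y : V2, exists x : V1, f x = y,
      forall x y : V1, e1 x y -> e2 (f x) (f y),
      forall x : V1, {in [set y | e1 x y] &, injective f} &
      forall x : V1, f @: [set y | e1 x y] = [set z | e2 (f x) z]].

(* Covering tower (indexed from 0 rather than 1): graphs G_n = (V n, adj n)
   that are finite, simple, connected, with covering maps p n : G_{n+1} -> G_n. *)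
Definition covering_tower (V : nat -> finType) (adj : forall n, rel (V n))
    (p : forall n, V n.+1 -> V n) : Prop :=
  forall n, [/\ simple_graph (adj n), connected_graph (adj n) &
                covering_map (adj n.+1) (adj n) (p n)].

(* L(A): the edges between A and its complement (each counted once,
   oriented from A to its complement). *)
Definition boundary (V : finType) (e : rel V) (A : {set V}) : {set V * V} :=
  [set xy : V * V | [&& xy.1 \in A, xy.2 \notin A & e xy.1 xy.2]].

(* Ch(G) >= c, i.e. |L(A)|/|A| >= c for every 0 < |A| <= |V|/2
   (this is what "min_{A} |L(A)|/|A| >= c" unfolds to). *)
Definition cheeger_ge (V : finType) (e : rel V) (c : rat) : Prop :=
  forall A : {set V}, (0 < #|A|)%N -> (2 * #|A| <= #|V|)%N ->
    (c <= (#|boundary e A|%:R / #|A|%:R))%R.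

Definition expanding (V : nat -> finType) (adj : forall n, rel (V n)) : Prop :=
  exists c : rat, (0 < c)%R /\ forall n, cheeger_ge (adj n) c.

Definition bipartite (V : finType) (e : rel V) : Prop :=
  exists col : V -> bool, forall x y : V, e x y -> col x != col y.

Definition edges (V : finType) (e : rel V) : {set {set V}} :=
  [set [set xy.1; xy.2] | xy in [set xy : V * V | e xy.1 xy.2]].

Definition erase_edges (V : finType) (e : rel V) (F : {set {set V}}) : rel V :=
  fun x y => e x y && ([set x; y] \notin F).

Definition bip_erase_ge (V : finType) (e : rel V) (m : rat) : Prop :=
  forall F : {set {set V}}, F \subset edges e -> bipartite (erase_edges e F) ->
    (m <= #|F|%:R)%R.

(* Main.v *)
Require Import Defs.
From HB Require Import structures.
From mathcomp Require Import all_boot all_order all_algebra.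
From Stdlib Require Import Lia Classical.
Import Order.TTheory GRing.Theory Num.Theory.

Set Implicit Arguments. Unset Strict Implicit. Unset Printing Implicit Defensive.

Definition lcov (V1 V2 : finType) (e1 : rel V1) (e2 : rel V2) (f : V1 -> V2) : Prop :=
 [/\ forall y, exists x, f x = y,
     forall x y, e1 x y -> e2 (f x) (f y),
     forall x y1 y2, e1 x y1 -> e1 x y2 -> f y1 = f y2 -> y1 = y2 &
     forall x u, e2 (f x) u -> exists y, e1 x y /\ f y = u].

Lemma cov_lcov (V1 V2 : finType) (e1 : rel V1) (e2 : rel V2) f :
  covering_map e1 e2 f -> lcov e1 e2 f.
Proof.
case=> Hs Hh Hi Him; split=> //.
- move=> x y1 y2 h1 h2 E; apply: (Hi x) => //; by rewrite inE.
- move=> x u hu.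
  have : u \in [set z | e2 (f x) z] by rewrite inE.
  rewrite -Him => /imsetP [y]; rewrite inE => hy ->; by exists y.
Qed.

Lemma lcov_id (V : finType) (e : rel V) : lcov e e id.
Proof.
split=> //; first by move=> y; exists y.
by move=> x u h; exists u.
Qed.

Lemma lcov_comp (V1 V2 V3 : finType) (e1 : rel V1) (e2 : rel V2) (e3 : rel V3) f g :
  lcov e1 e2 f -> lcov e2 e3 g -> lcov e1 e3 (fun x => g (f x)).
Proof.
case=> fs fh fi fe [gs gh gi ge]; split.
- move=> z; have [y <-] := gs z; have [x <-] := fs y; by exists x.
- by move=> x y h; apply: gh; apply: fh.
- move=> x y1 y2 h1 h2 E; apply: (fi x) => //.
  exact: (gi (f x)) (fh _ _ h1) (fh _ _ h2) E.
- move=> x u hu; have [z [hz <-]] := ge _ _ hu.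
  have [y [hy <-]] := fe _ _ hz; by exists y.
Qed.

Section Fib.
Variables (V1 V2 : finType) (e1 : rel V1) (e2 : rel V2) (f : V1 -> V2).
Hypothesis (Hl : lcov e1 e2 f) (s1 : symmetric e1) (s2 : symmetric e2).

Definition fib (v : V2) := [set x | f x == v].
Definition lifts (u v : V2) : {set V1 * V1} :=
  [set xy | [&& e1 xy.1 xy.2, f xy.1 == u & f xy.2 == v]].

Lemma lifts_fst (P : pred V1) u v : e2 u v ->
  #|lifts u v :&: [set xy | P xy.1]| = #|fib u :&: [set x | P x]|.
Proof.
move=> huv; case: Hl => _ _ fi fe.
rewrite -(@card_in_imset _ _ fst); last first.
  move=> [x1 y1] [x2 y2]; rewrite !inE /= => /andP[/and3P[h1 /eqP a1 /eqP b1] _]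
    /andP[/and3P[h2 /eqP a2 /eqP b2] _] E; subst x2.
  have -> // : y1 = y2 by apply: (fi x1); rewrite // b1 b2.
apply: eq_card => x; rewrite !inE; apply/imsetP/andP.
- case=> [[a b]]; rewrite !inE /= => /andP[/and3P[_ ha hb] hP] ->; by rewrite ha hP.
- case=> /eqP hx hP; have [y [hy hyv]] : exists y, e1 x y /\ f y = v.
    by apply: fe; rewrite hx.
  exists (x, y) => //; by rewrite !inE /= hy hx hyv !eqxx hP.
Qed.

Lemma lifts_snd (P : pred V1) u v : e2 u v ->
  #|lifts u v :&: [set xy | P xy.2]| = #|fib v :&: [set x | P x]|.
Proof.
move=> huv; case: Hl => _ _ fi fe.
rewrite -(@card_in_imset _ _ snd); last first.
  move=> [x1 y1] [x2 y2]; rewrite !inE /= => /andP[/and3P[h1 /eqP a1 /eqP b1] _]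
    /andP[/and3P[h2 /eqP a2 /eqP b2] _] E; subst y2.
  have -> // : x1 = x2 by apply: (fi y1); rewrite 1?s1 // a1 a2.
apply: eq_card => y; rewrite !inE; apply/imsetP/andP.
- case=> [[a b]]; rewrite !inE /= => /andP[/and3P[_ ha hb] hP] ->; by rewrite hb hP.
- case=> /eqP hy hP; have [x [hx hxu]] : exists x, e1 y x /\ f x = u.
    by apply: fe; rewrite hy s2.
  exists (x, y) => //; by rewrite !inE /= s1 hx hy hxu !eqxx hP.
Qed.

Lemma lifts_card u v : e2 u v -> #|lifts u v| = #|fib u|.
Proof.
move=> h; have := lifts_fst predT h.
have -> : lifts u v :&: [set xy | predT xy.1] = lifts u v by apply/setP=> z; rewrite !inE andbT.
have -> // : fib u :&: [set x | predT x] = fib u by apply/setP=> z; rewrite !inE andbT.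
Qed.

Lemma fib_edge u v : e2 u v -> #|fib u| = #|fib v|.
Proof.
move=> h; rewrite -(lifts_card h).
have := lifts_snd predT h.
have -> : lifts u v :&: [set xy | predT xy.2] = lifts u v by apply/setP=> z; rewrite !inE andbT.
have -> // : fib v :&: [set x | predT x] = fib v by apply/setP=> z; rewrite !inE andbT.
Qed.

Lemma fib_const u v : connect e2 u v -> #|fib u| = #|fib v|.
Proof.
case/connectP=> p; elim: p u => [|w p IH] u /= ; first by move=> _ ->.
by case/andP=> h hp hl; rewrite (fib_edge h); apply: IH.
Qed.

Lemma card_fibsum : #|V1| = \sum_(v : V2) #|fib v|.
Proof.
rewrite -sum1_card (partition_big f predT) //=.
apply: eq_bigr => v _; rewrite -sum1_card; apply: eq_bigl => x; by rewrite inE.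
Qed.

Lemma card_sum_fib (A : {set V1}) : #|A| = \sum_(v : V2) #|fib v :&: A|.
Proof.
rewrite -sum1_card (partition_big f predT) //=.
apply: eq_bigr => v _; rewrite -sum1_card; apply: eq_bigl => x; by rewrite !inE andbC.
Qed.

End Fib.


Lemma connect_homo (T U : finType) (e : rel T) (e' : rel U) (h : T -> U) :
  (forall x y, e x y -> e' (h x) (h y)) -> forall x y, connect e x y -> connect e' (h x) (h y).
Proof.
move=> H x y /connectP [p]; elim: p x => [|z p IH] x /=; first by move=> _ ->.
case/andP=> hxz hp hl; apply: connect_trans (connect1 (H _ _ hxz)) (IH _ hp hl).
Qed.

Section Par.
Variables (V : finType) (e : rel V).
Definition pe : rel (V * bool) := fun a b => e a.1 b.1 && (b.2 == ~~ a.2).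

Lemma pe_sym : symmetric e -> symmetric pe.
Proof.
move=> s [a b] [c d]; rewrite /pe /= s; congr (_ && _).
by case: b; case: d.
Qed.

Lemma pe_flip a b c d : connect pe (a, b) (c, d) -> connect pe (a, ~~ b) (c, ~~ d).
Proof.
move/(connect_homo (e' := pe) (h := fun z : V * bool => (z.1, ~~ z.2))); apply.
move=> [x1 x2] [y1 y2]; rewrite /pe /= => /andP[-> /eqP ->]; by rewrite eqxx.
Qed.

Lemma pe_reach v x b : connect e v x -> exists b', connect pe (v, b) (x, b').
Proof.
case/connectP=> p; elim: p v b => [|z p IH] v b /=.
  by move=> _ ->; exists b.
case/andP=> hvz hp hl; have [b' h] := IH z (~~ b) hp hl; exists b'.
apply: connect_trans h; apply: connect1; by rewrite /pe /= hvz eqxx.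
Qed.

Lemma nonbip_odd : symmetric e -> (forall x y, connect e x y) -> ~ bipartite e ->
  forall v, connect pe (v, false) (v, true).
Proof.
move=> s cn nb v; apply: contraT => /negP H; exfalso; apply: nb.
have cs : connect_sym pe by apply: sym_connect_sym; apply: pe_sym.
exists (fun x => connect pe (v, false) (x, false)) => x y hxy.
have step : forall b, connect pe (x, b) (y, ~~ b).
  by move=> b; apply: connect1; rewrite /pe /= hxy eqxx.
case Cx: (connect pe (v, false) (x, false)).
- apply/negP => Cy; apply: H.
  have h1 : connect pe (v, false) (y, true) := connect_trans Cx (step false).
  have h2 : connect pe (v, true) (y, true) by move/pe_flip: Cy.
  by apply: connect_trans h1 _; rewrite cs.
- rewrite eq_sym eqbF_neg negbK.
  have [b' hb] := pe_reach false (cn v x).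
  case: b' hb => hb; last by rewrite hb in Cx.
  exact: connect_trans hb (step true).
Qed.

Lemma path_bound (q : V * bool -> nat) K a p :
  (forall x y, pe x y -> q y <= q x + K /\ q x <= q y + K) ->
  path pe a p -> q (last a p) <= q a + size p * K /\ q a <= q (last a p) + size p * K.
Proof.
move=> H; elim: p a => [|z p IH] a /=; first by rewrite !addn0.
case/andP=> haz hp; have [h1 h2] := IH z hp; have [h3 h4] := H _ _ haz.
move: h1 h2 h3 h4; rewrite mulSn.
move: (q (last z p)) (q z) (q a) (size p * K) => A B C M.
move=> /ssrnat.leP h1 /ssrnat.leP h2 /ssrnat.leP h3 /ssrnat.leP h4; split; apply/ssrnat.leP; rewrite -?plusE in h1 h2 h3 h4 *; lia.
Qed.

Lemma odd_walk_bound (q : V * bool -> nat) K v :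
  (forall x y, pe x y -> q y <= q x + K /\ q x <= q y + K) ->
  connect pe (v, false) (v, true) ->
  q (v, true) <= q (v, false) + (2 * #|V|) * K /\ q (v, false) <= q (v, true) + (2 * #|V|) * K.
Proof.
move=> H /connectP [p hp hl].
move: hl; case: (shortenP hp) => p' hp' hu _ hl'.
have hs : size p' <= 2 * #|V|.
  have : size ((v, false) :: p') <= #|{: V * bool}|.
    by rewrite -(card_uniqP hu) max_card.
  by rewrite card_prod card_bool /= mulnC => /ltnW.
have [h1 h2] := path_bound H hp'.
rewrite -hl' in h1 h2.
have hk : size p' * K <= 2 * #|V| * K by rewrite leq_mul2r hs orbT.
split.
- apply: leq_trans h1 _; by rewrite leq_add2l.
- apply: leq_trans h2 _; by rewrite leq_add2l.
Qed.
End Par.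


Definition bad (V : finType) (e : rel V) (col : V -> bool) : {set V * V} :=
  [set xy | e xy.1 xy.2 && (col xy.1 == col xy.2)].

Lemma pair_set_inj (V : finType) (x1 y1 x2 y2 : V) :
  [set x1; y1] = [set x2; y2] -> x1 != y1 ->
  (x1, y1) = (x2, y2) \/ (x1, y1) = (y2, x2).
Proof.
move=> /setP E n1.
move: (E x1) (E y1) (E x2); rewrite !inE !eqxx ?orbT /= => /esym h1 /esym h2 h3.
case/orP: h1 => /eqP h1; case/orP: h2 => /eqP h2; case/orP: h3 => /eqP h3; subst;
  rewrite ?eqxx // in n1; by [left | right].
Qed.

Lemma erase_bad (V : finType) (e : rel V) (F : {set {set V}}) col :
  irreflexive e -> (forall x y, erase_edges e F x y -> col x != col y) ->
  #|bad e col| <= 2 * #|F|.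
Proof.
move=> irr H.
pose r := fun xy : V * V => (enum_rank xy.1 < enum_rank xy.2)%N.
pose g := fun xy : V * V => [set xy.1; xy.2].
have inF : forall xy, xy \in bad e col -> g xy \in F.
  move=> [x y]; rewrite inE /= => /andP[hxy /eqP hc].
  apply: contraT => hn; have := H x y; rewrite /erase_edges hxy hn hc eqxx.
  by move/(_ isT).
have neq : forall xy, xy \in bad e col -> xy.1 != xy.2.
  move=> [x y]; rewrite inE /= => /andP[hxy _]; apply/eqP => E; subst.
  by rewrite irr in hxy.
have Hb : forall b : bool, #|bad e col :&: [set xy | r xy == b]| <= #|F|.
  move=> b; rewrite -(@card_in_imset _ _ g); last first.
    move=> [x1 y1] [x2 y2]; rewrite !in_setI => /andP[h1 r1] /andP[h2 r2] E.
    have n1 := neq _ h1.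
    rewrite !inE /= in r1 r2; move/eqP: r1 => r1; move/eqP: r2 => r2.
    case: (pair_set_inj E n1) => // [[E1 E2]]; subst.
    move: r2; rewrite /r /=.
    case: ltngtP => //; try (by move=> h; rewrite ltnNge (ltnW h));
      by move/ord_inj/enum_rank_inj => E'; rewrite E' eqxx in n1.
  apply: subset_leq_card; apply/subsetP => T /imsetP [xy]; rewrite inE => /andP[h _] ->.
  exact: inF.
rewrite -(cardsID [set xy | r xy == true]) mul2n -addnn; apply: leq_add; first exact: Hb.
have -> : bad e col :\: [set xy | r xy == true] = bad e col :&: [set xy | r xy == false].
  apply/setP=> z; rewrite !inE; by case: (r z); rewrite ?andbT ?andbF.
exact: Hb.
Qed.

Lemma bip_erase_from (V : finType) (e : rel V) (m : rat) :
  irreflexive e -> (forall col, (m *+ 2 <= (#|bad e col|)%:R)%R) -> bip_erase_ge e m.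
Proof.
move=> irr H F _ [col hc].
have h1 := H col; have h2 := erase_bad irr hc.
have : (m *+ 2 <= (#|F|%:R) *+ 2)%R.
  by apply: le_trans h1 _; rewrite -mulrnA ler_nat mulnC.
by rewrite lerMn2r.
Qed.

Section Bal.
Variables (V1 V2 : finType) (e1 : rel V1) (e2 : rel V2) (f : V1 -> V2).
Hypothesis (Hl : lcov e1 e2 f) (s1 : symmetric e1) (s2 : symmetric e2).
Variable col : V1 -> bool.
Variable D : nat.
Hypothesis HD : forall u, #|fib f u| = D.

Definition Tc (v : V2) := #|fib f v :&: [set x | col x]|.

Lemma Tc_le v : Tc v <= D.
Proof. by rewrite -(HD v) /Tc subset_leq_card // subsetIl. Qed.

Lemma edge_bal u v : e2 u v ->
  Tc u + Tc v <= D + #|bad e1 col| /\ D <= Tc u + Tc v + #|bad e1 col|.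
Proof.
move=> huv.
pose S := lifts e1 f u v.
pose X := S :&: [set xy | col xy.1]; pose Y := S :&: [set xy | col xy.2].
have hX : #|X| = Tc u by rewrite /X (lifts_fst Hl _ huv).
have hY : #|Y| = Tc v by rewrite /Y (lifts_snd Hl s1 s2 _ huv).
have hS : #|S| = D by rewrite /S (lifts_card Hl huv) HD.
have hUI := cardsUI X Y.
have hSD := cardsID (X :|: Y) S.
have E0 : S :&: (X :|: Y) = X :|: Y.
  by apply/setIidPr; rewrite subUset !subsetIl.
rewrite E0 in hSD.
have hB := cardsID [set xy | col xy.1] (bad e1 col).
have h1 : #|X :&: Y| <= #|bad e1 col :&: [set xy | col xy.1]|.
  apply: subset_leq_card; apply/subsetP=> z; rewrite !inE.
  by case/andP=> /andP[/and3P[-> _ _] ->] /andP[_ ->].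
have h2 : #|S :\: (X :|: Y)| <= #|bad e1 col :\: [set xy | col xy.1]|.
  apply: subset_leq_card; apply/subsetP=> z; rewrite !inE.
  case/andP=> /norP[/nandP h3 /nandP h4] hz.
case: h3 => h3; first by rewrite hz in h3.
  case: h4 => h4; first by rewrite hz in h4.
  move/and3P: hz => [-> _ _]; by move/negbTE: h3 => ->; move/negbTE: h4 => ->.
move: hUI hSD hB h1 h2; rewrite hX hY hS.
move: #|X :|: Y| #|X :&: Y| #|S :\: (X :|: Y)| #|bad e1 col|
  #|bad e1 col :&: [set xy | col xy.1]| #|bad e1 col :\: [set xy | col xy.1]|.
move=> a b c d g h h1 h2 h3 /ssrnat.leP h4 /ssrnat.leP h5; split; apply/ssrnat.leP; rewrite -?plusE in h1 h2 h3 h4 h5 *; lia.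
Qed.

End Bal.


Section Main.
Variables (V1 V2 : finType) (e1 : rel V1) (e2 : rel V2) (f : V1 -> V2).
Hypothesis (Hl : lcov e1 e2 f) (s1 : symmetric e1) (s2 : symmetric e2).
Hypothesis (cn2 : forall x y, connect e2 x y) (nb2 : ~ bipartite e2).
Variable col : V1 -> bool.
Variable D : nat.
Hypothesis HD : forall u, #|fib f u| = D.

Definition Aset (g : V2 -> bool) := [set x | col x == g (f x)].

Definition qq (a : V2 * bool) := if a.2 then D - Tc f col a.1 else Tc f col a.1.

Lemma qq_bound v b :
  2 * qq (v, b) <= D + 2 * #|V2| * #|bad e1 col| /\
  D <= 2 * qq (v, b) + 2 * #|V2| * #|bad e1 col|.
Proof.
have step : forall x y, pe e2 x y -> qq y <= qq x + #|bad e1 col| /\ qq x <= qq y + #|bad e1 col|.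
  move=> [a b1] [c b2]; rewrite /pe /qq /= => /andP[hac /eqP ->].
  have [h1 h2] := edge_bal Hl s1 s2 col HD hac.
  have t1 := Tc_le col HD a; have t2 := Tc_le col HD c.
  move: h1 h2 t1 t2; move: (Tc f col a) (Tc f col c) #|bad e1 col| => A C B.
  move=> /ssrnat.leP h1 /ssrnat.leP h2 /ssrnat.leP h3 /ssrnat.leP h4.
  case: b1 => /=; split; apply/ssrnat.leP; rewrite -?plusE -?minusE in h1 h2 h3 h4 *; lia.
have [h1 h2] := odd_walk_bound step (nonbip_odd s2 cn2 nb2 v).
have t1 := Tc_le col HD v.
move: h1 h2 t1; rewrite /qq /=.
move: (Tc f col v) (2 * #|V2| * #|bad e1 col|) => T L.
move=> /ssrnat.leP h1 /ssrnat.leP h2 /ssrnat.leP h3.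
case: b => /=; split; apply/ssrnat.leP; rewrite -?plusE -?minusE -?multE in h1 h2 h3 *; lia.
Qed.

Lemma card_V1 : #|V1| = #|V2| * D.
Proof.
rewrite (card_fibsum f) (eq_bigr (fun _ => D)); last by move=> v _; rewrite HD.
by rewrite sum_nat_const.
Qed.

Lemma fibA v g : #|fib f v :&: Aset g| = qq (v, ~~ g v).
Proof.
rewrite /qq /Tc /=; case E: (g v) => /=.
- apply: eq_card => x; rewrite !inE; case: eqVneq => [->|] //=.
  by rewrite E eqb_id.
- rewrite -(HD v) -(cardsID [set x | col x] (fib f v)) addnC addnK.
  apply: eq_card => x; rewrite !inE; case: eqVneq => [->|] //=.
  - by rewrite E eqbF_neg andbT.
  - by rewrite andbF.
Qed.

Lemma A_bounds g :
  2 * #|Aset g| <= #|V1| + #|V2| * (2 * #|V2| * #|bad e1 col|) /\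
  #|V1| <= 2 * #|Aset g| + #|V2| * (2 * #|V2| * #|bad e1 col|).
Proof.
set L := 2 * #|V2| * #|bad e1 col|.
rewrite card_V1 (card_sum_fib f (Aset g)) big_distrr /= -mulnDr.
have -> : #|V2| * (D + L) = \sum_(v : V2) (D + L) by rewrite sum_nat_const.
split.
- apply: leq_sum => v _; rewrite fibA; by have [] := qq_bound v (~~ g v).
- have -> : #|V2| * D = \sum_(v : V2) D by rewrite sum_nat_const.
  have -> : #|V2| * L = \sum_(v : V2) L by rewrite sum_nat_const.
  rewrite -big_split /=; apply: leq_sum => v _; rewrite fibA.
  by have [] := qq_bound v (~~ g v).
Qed.

Lemma boundary_bound g :
  #|boundary e1 (Aset g)| <= #|bad e1 col| + D * #|bad e2 g|.
Proof.
pose P := [set xy | e1 xy.1 xy.2 && ((f xy.1, f xy.2) \in bad e2 g)].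
have hP : #|P| = D * #|bad e2 g|.
  rewrite -sum1_card (partition_big (fun xy => (f xy.1, f xy.2)) (mem (bad e2 g))) /=;
    last by move=> xy; rewrite inE => /andP[_ ->].
  rewrite mulnC -sum_nat_const; apply: eq_bigr => [[u v]] huv.
  have euv : e2 u v by move: huv; rewrite inE => /andP[].
  rewrite -(HD u) -(lifts_card Hl euv) -sum1_card; apply: eq_bigl => [[x y]].
  rewrite !inE /= xpair_eqE.
  case E1: (f x == u); case E2: (f y == v); rewrite ?andbF ?andbT //=.
  move/eqP: E1 => ->; move/eqP: E2 => ->.
  move: huv; rewrite inE /= => /andP[h1 h2]; rewrite h1 h2; by case: (e1 x y).
rewrite -hP; apply: leq_trans (subset_leq_card _) (leq_card_setU _ _).
apply/subsetP => [[x y]]; rewrite !inE /= => /and3P[hx hy hxy].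
rewrite hxy /=; case hc: (col x == col y) => //=.
have hh := (match Hl with And4 _ h _ _ => h end) _ _ hxy.
rewrite hh /=; move: hx hy hc; move/eqP=> ->.
by case: (g (f x)); case: (g (f y)); case: (col y).
Qed.

End Main.


Lemma cheeger_set (V : finType) (e : rel V) (c : rat) (A : {set V}) :
  (0 < c)%R -> cheeger_ge e c -> 2 * #|A| <= #|V| ->
  (c * #|A|%:R <= #|boundary e A|%:R)%R.
Proof.
move=> c0 hc hA; case: (posnP #|A|) => [->|pos]; first by rewrite mulr0 ler0n.
have := hc A pos hA; rewrite ler_pdivlMr //; by rewrite ltr0n.
Qed.

Section Step.
Variables (V1 V2 : finType) (e1 : rel V1) (e2 : rel V2) (f : V1 -> V2).
Hypothesis (Hl : lcov e1 e2 f) (s1 : symmetric e1) (s2 : symmetric e2).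
Hypothesis (cn2 : forall x y, connect e2 x y) (nb2 : ~ bipartite e2).
Variable col : V1 -> bool.
Variable D : nat.
Hypothesis HD : forall u, #|fib f u| = D.

Lemma exp_step (c : rat) g : (0 < c)%R -> cheeger_ge e1 c ->
  exists s : nat, (c * s%:R <= (#|bad e1 col| + D * #|bad e2 g|)%:R)%R /\
    #|V1| <= 2 * s + #|V2| * (2 * #|V2| * #|bad e1 col|).
Proof.
move=> c0 hc.
have bnd : forall g', (#|boundary e1 (Aset f col g')|%:R <=
    (#|bad e1 col| + D * #|bad e2 g'|)%:R :> rat)%R.
  by move=> g'; rewrite ler_nat; apply: (boundary_bound Hl col HD).
have Hbg : #|bad e2 (fun v => ~~ g v)| = #|bad e2 g|.
  by apply: eq_card => z; rewrite !inE; case: (g z.1); case: (g z.2).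
have HC : Aset f col (fun v => ~~ g v) = ~: Aset f col g.
  by apply/setP => x; rewrite !inE; case: (col x); case: (g (f x)).
case: (leqP (2 * #|Aset f col g|) #|V1|) => hA.
- exists #|Aset f col g|; split.
  + exact: le_trans (cheeger_set c0 hc hA) (bnd g).
  + by have [] := A_bounds Hl s1 s2 cn2 nb2 col HD g.
- exists #|Aset f col (fun v => ~~ g v)|; split.
  + rewrite -Hbg; apply: le_trans (bnd _); apply: cheeger_set => //.
    rewrite HC; have := cardsC (Aset f col g); move: hA.
    move: #|Aset f col g| #|~: Aset f col g| => a b /ssrnat.ltP h2 h1.
    apply/ssrnat.leP; rewrite -?plusE -?multE in h1 h2 *; lia.
  + by have [] := A_bounds Hl s1 s2 cn2 nb2 col HD (fun v => ~~ g v).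
Qed.
End Step.

Lemma arith (c : rat) N1 N2 D b1 b2 s : (0 < c)%R -> N1 = N2 * D ->
  (c * s%:R <= (b1 + D * b2)%:R)%R -> N1 <= 2 * s + N2 * (2 * N2 * b1) ->
  (4 * b2%:R <= c * N2%:R)%R ->
  (c * N1%:R <= 4 * b1%:R * (1 + c * (N2 * N2)%:R))%R.
Proof.
move=> c0 EN h1 h2 h3.
set x := (c * N1%:R)%R; set y := (b1%:R : rat)%R; set z := (c * (N2 * N2)%:R * y)%R.
set u := (c * s%:R)%R; set w := ((D * b2)%:R : rat)%R.
Local Open Scope ring_scope.
have H1 : (u <= y + w)%R by rewrite /y /w -natrD.
have H2 : (x <= 2 * u + 2 * z)%R.
  rewrite /x /u /z /y.
  have : (N1%:R <= (2 * s + N2 * (2 * N2 * b1))%:R :> rat)%R by rewrite ler_nat.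
  move/(ler_wpM2l (ltW c0)); move/le_trans; apply.
  rewrite natrD mulrDr !natrM; apply: lerD; first by rewrite mulrCA.
  by rewrite !mulrA [c * N2%:R * 2]mulrC !mulrA.
have H3 : (4 * w <= x)%R.
  rewrite /w /x EN natrM mulrA [4 * _]mulrC -mulrA natrM [c * _]mulrCA.
  rewrite [X in _ <= X]mulrC -mulrA mulrCA; rewrite mulrCA [c * _]mulrCA; apply: ler_wpM2l h3; exact: ler0n.
have H4 : (2 * x <= 4 * y + x + 4 * z)%R.
  have e2 : (2 : rat) * 2 = 4 by [].
  apply: (@le_trans _ _ (2 * (2 * u + 2 * z))); first by apply: ler_wpM2l.
  rewrite mulrDr !mulrA e2 lerD2r.
  have h : 4 * u <= 4 * y + 4 * w by rewrite -mulrDr; apply: ler_wpM2l.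
  rewrite -mulrA; apply: le_trans h _; by rewrite lerD2l.
have H5 : (x <= 4 * y + 4 * z)%R.
  have e : 2 * x = x + x by rewrite mulr2n mulrDl mul1r.
  by move: H4; rewrite e [4 * y + x]addrC -addrA lerD2l.
apply: le_trans H5 _; rewrite mulrDr mulr1 /z /y.
by rewrite lerD2l -[X in _ <= X]mulrA [X in _ <= 4 * X]mulrC.
Qed.


Section RatLemmas.
Lemma rfinal (c K : rat) (N b : nat) : (0 < K)%R ->
  (c * N%:R <= 4 * b%:R * K)%R -> ((c / (8 * K) * N%:R) *+ 2 <= b%:R)%R.
Proof.
Local Open Scope ring_scope.
move=> K0 h.
have K8 : (0 < 8 * K)%R by rewrite mulr_gt0.
rewrite -mulr_natr.
have -> : c / (8 * K) * N%:R * 2 = (c * N%:R * 2) / (8 * K).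
  by rewrite -!mulrA; congr (c * _); rewrite mulrC -mulrA.
rewrite ler_pdivrMr //.
apply: le_trans (_ : 4 * b%:R * K * 2 <= _)%R.
  by rewrite ler_wpM2r.
have e : (4 * 2 : rat) = 8 by [].
by rewrite mulrAC [4 * _]mulrC -(mulrA b%:R) e -mulrA.
Qed.

Lemma rsmall (c : rat) (Nm Nn b : nat) : (0 < c)%R -> (Nm <= Nn)%N -> (0 < b)%N ->
  (c * Nm%:R <= 4 * b%:R * (1 + c * (Nn * Nn)%:R))%R.
Proof.
move=> c0 hN hb.
have hN2 : (Nm <= Nn * Nn)%N.
  case: Nn hN => [|k] hN; first by rewrite leqn0 in hN; rewrite (eqP hN).
  by apply: leq_trans hN _; rewrite leq_pmulr.
have K0 : 0 <= 1 + c * (Nn * Nn)%:R by rewrite addr_ge0 // mulr_ge0 // ltW.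
apply: (@le_trans _ _ (c * (Nn * Nn)%:R)).
  by apply: ler_wpM2l; [exact: ltW | rewrite ler_nat].
apply: (@le_trans _ _ (1 + c * (Nn * Nn)%:R)); first by rewrite lerDr.
rewrite -{1}[1 + _]mul1r; apply: ler_wpM2r => //.
have : (1 <= b%:R :> rat) by rewrite ler1n.
move=> h1; apply: (@le_trans _ _ b%:R) => //.
rewrite -{1}[b%:R]mul1r; apply: ler_wpM2r; first by rewrite ler0n.
by [].
Qed.

End RatLemmas.

Fixpoint liftn (V : nat -> finType) (p : forall n, V n.+1 -> V n) (n j : nat) : V (j + n)%N -> V n :=
  match j return V (j + n)%N -> V n with
  | 0 => fun x => x
  | j'.+1 => fun x => @liftn V p n j' (p (j' + n)%N x)
  end.
Arguments liftn {V} p n j _.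

Lemma lcov_liftn (V : nat -> finType) (adj : forall n, rel (V n)) p :
  covering_tower adj p -> forall n j, lcov (adj (j + n)%N) (adj n) (liftn p n j).
Proof.
move=> Ht n; elim=> [|j IH]; first exact: lcov_id.
have [_ _ hc] := Ht (j + n)%N.
exact: (lcov_comp (cov_lcov hc) IH).
Qed.

Lemma surj_card (V1 V2 : finType) (f : V1 -> V2) : (forall y, exists x, f x = y) -> (#|V2| <= #|V1|)%N.
Proof.
move=> hs.
have h1 : (#|[set: V2]| <= #|f @: [set: V1]|)%N.
  apply: subset_leq_card; apply/subsetP=> y _; have [x <-] := hs y; by rewrite imset_f ?inE.
have h2 := leq_imset_card f [set: V1].
by move: (leq_trans h1 h2); rewrite !cardsT.
Qed.

Unset Implicit Arguments. Set Strict Implicit. Set Printing Implicit Defensive.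

Theorem theorem9 (k : nat) (V : nat -> finType) (adj : forall n, rel (V n))
    (p : forall n, V n.+1 -> V n) :
  covering_tower adj p ->
  (forall n, regular_graph k (adj n)) ->
  expanding adj ->
  let P1 := exists N : nat, forall n, (N <= n)%N -> bipartite (adj n) in
  let P2 := exists r : rat, (0 < r)%R /\
              forall n, bip_erase_ge (adj n) (r * #|V n|%:R)%R in
  (P1 \/ P2) /\ ~ (P1 /\ P2).
Proof.
move=> Ht _ [c [c0 Hc]] P1 P2.
have sym : forall n, symmetric (adj n) by move=> n; have [[s _] _ _] := Ht n.
have irr : forall n, irreflexive (adj n) by move=> n; have [[_ i] _ _] := Ht n.
have cn : forall n x y, connect (adj n) x y by move=> n; have [_ [_ h] _] := Ht n.
have pos : forall n, (0 < #|V n|)%N by move=> n; have [_ [h _] _] := Ht n.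
have up : forall n, bipartite (adj n) -> bipartite (adj n.+1).
  move=> n [col hc]; have [_ _ [_ hh _ _]] := Ht n.
  by exists (fun x => col (p n x)) => x y h; apply: hc; apply: hh.
have upN : forall N n, (N <= n)%N -> bipartite (adj N) -> bipartite (adj n).
  move=> N n /subnK <-; elim: (n - N)%N => [|j IH] hb //=.
  exact: (up (j + N)%N (IH hb)).
have nb1 : forall n (col : V n -> bool), ~ bipartite (adj n) -> (0 < #|bad (adj n) col|)%N.
  move=> n col nb; rewrite lt0n cards_eq0; apply/negP => /eqP E; apply: nb.
  exists col => x y h; apply/negP => hc.
  have : (x, y) \in bad (adj n) col by rewrite inE /= h hc.
  by rewrite E inE.
split.
- case: (classic P1) => [h|nP1]; [by left|right].
  have nb : forall n, ~ bipartite (adj n).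
    by move=> n hb; apply: nP1; exists n => m hm; exact: upN _ _ hm hb.
  case: (classic (exists n (g : V n -> bool),
     (4 * #|bad (adj n) g|%:R <= c * #|V n|%:R)%R)) => [[n [g hg]] | hno].
  + set K := (1 + c * (#|V n| * #|V n|)%:R)%R.
    have K0 : (0 < K)%R by rewrite /K ltr_pwDl // mulr_ge0 // ltW.
    exists (c / (8 * K))%R; split; first by rewrite divr_gt0 // mulr_gt0.
    move=> m; case: (leqP n m) => hnm.
    * rewrite -(subnK hnm); set j := (m - n)%N.
      apply: bip_erase_from (irr _) _ => col; apply: rfinal K0 _.
      have Hl := lcov_liftn Ht n j.
      case/card_gt0P: (pos n) => v0 _.
      have HD : forall u, #|fib (liftn p n j) u| = #|fib (liftn p n j) v0|.
        by move=> u; apply: (fib_const Hl (sym _) (sym n)); apply: cn.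
      have [s [hs1 hs2]] := exp_step Hl (sym _) (sym n) (cn n) (nb n) col HD g c0 (Hc _).
      exact: arith c0 (card_V1 HD) hs1 hs2 hg.
    * apply: bip_erase_from (irr _) _ => col; apply: rfinal K0 _.
      apply: rsmall c0 _ (nb1 _ _ (nb m)).
      rewrite -(subnK (ltnW hnm)).
      case: (lcov_liftn Ht m (n - m)) => hs _ _ _; exact: surj_card hs.
  + exists (c / (8 * 1))%R; split; first by rewrite divr_gt0 // mulr_gt0.
    move=> m; apply: bip_erase_from (irr _) _ => col; apply: rfinal ltr01 _.
    rewrite mulr1; apply: ltW; rewrite ltNge; apply/negP => h; apply: hno.
    by exists m, col.
- case=> [[N hN] [r [r0 hr]]].
  have hb : bipartite (erase_edges (adj N) set0).
    have [col hc] := hN N (leqnn N).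
    by exists col => x y; rewrite /erase_edges => /andP[h _]; apply: hc.
  have := hr N set0 (sub0set _) hb; rewrite cards0.
  have : (0 < r * #|V N|%:R)%R by rewrite mulr_gt0 // ltr0n.
  by move=> h1 h2; move: (lt_le_trans h1 h2); rewrite ltxx.
Qed.
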